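(* Let $X$ and $Y$ be tripointed metric spaces and let $f\colon X\to Y$ be a map preserving the distinguished points. If $f$ has any one of the following properties, then so does $Ff=M\otimes f\colon M\otimes X\to M\otimes Y$: (i) $f$ is continuous; (ii) $f$ is Lipschitz; (iii) $f$ is short (i.e. $d_Y(f(x),f(y))\le d_X(x,y)$ for all $x,y$); (iv) $f$ is an isometric embedding.
   Context: A tripointed metric space is a metric space $(X,d)$ with $d(x,y)\le 1$ for all $x,y$, together with three distinct distinguished points $T,L,R\in X$ with pairwise distances equal to $1$. Let $M=\{a,b,c\}$. For a tripointed metric space $X$, give $M\times X$ the metric $d((m,x),(n,y))=\tfrac12 d(x,y)$ if $m=n$ and $=1$ if $m\neq n$. Let $\sim$ be the equivalence relation on $M\times X$ generated by $(b,T)\sim(a,L)$, $(a,R)\sim(c,T)$, $(c,L)\sim(b,R)$. Then $M\otimes X$ is the quotient metric space $(M\times X)/\!\sim$ (distance = infimum over finite chains of sums of segment lengths, identified points having distance $0$; this is a metric), whose elements are written $m\otimes x$, with distinguished points $T=a\otimes T$, $L=b\otimes L$, $R=c\otimes R$; it is again a tripointed metric space. For a map $f\colon X\to Y$ preserving distinguished points, $M\otimes f\colon M\otimes X\to M\otimes Y$ is $(M\otimes f)(m\otimes x)=m\otimes f(x)$. *)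

(* Defs.v *)
From Stdlib Require Import Reals.
From Coquelicot Require Import Coquelicot.
Open Scope R_scope.

Record TriMetric := {
  carrier :> Type;
  tdist : carrier -> carrier -> R;
  tdist_refl : forall x, tdist x x = 0;
  tdist_sep : forall x y, tdist x y = 0 -> x = y;
  tdist_sym : forall x y, tdist x y = tdist y x;
  tdist_tri : forall x y z, tdist x z <= tdist x y + tdist y z;
  tdist_le1 : forall x y, tdist x y <= 1;
  ptT : carrier;
  ptL : carrier;
  ptR : carrier;
  tdist_TL : tdist ptT ptL = 1;
  tdist_TR : tdist ptT ptR = 1;
  tdist_LR : tdist ptL ptR = 1
}.

Arguments tdist {t}.
Arguments ptT {t}.
Arguments ptL {t}.
Arguments ptR {t}.

Inductive Mlet := Ma | Mb | Mc.

Definition Mlet_eqb (m n : Mlet) : bool :=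
  match m, n with
  | Ma, Ma | Mb, Mb | Mc, Mc => true
  | _, _ => false
  end.

Definition MX (X : TriMetric) : Type := (Mlet * carrier X)%type.

Definition dMX (X : TriMetric) (p q : MX X) : R :=
  if Mlet_eqb (fst p) (fst q) then tdist (snd p) (snd q) / 2 else 1.

Definition gen (X : TriMetric) (p q : MX X) : Prop :=
  (p = (Mb, ptT) /\ q = (Ma, ptL)) \/
  (p = (Ma, ptR) /\ q = (Mc, ptT)) \/
  (p = (Mc, ptL) /\ q = (Mb, ptR)).

(** [chain X p q c]: there is a finite chain from p to q of total length c,
    where each step either jumps between identified points (cost 0; the
    reflexive-symmetric-transitive closure of [gen] is thus covered) or is a
    segment in M x X costing its distance. *)
Inductive chain (X : TriMetric) : MX X -> MX X -> R -> Prop :=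
| chain_nil : forall p, chain X p p 0
| chain_gen : forall p q r c, (gen X p q \/ gen X q p) -> chain X q r c -> chain X p r c
| chain_seg : forall p q r c, chain X q r c -> chain X p r (dMX X p q + c).

(** Quotient distance on M (x) X, computed on representatives: infimum over
    all finite chains. *)
Definition qdist (X : TriMetric) (p q : MX X) : R :=
  real (Glb_Rbar (chain X p q)).

Definition qT (X : TriMetric) : MX X := (Ma, ptT).
Definition qL (X : TriMetric) : MX X := (Mb, ptL).
Definition qR (X : TriMetric) : MX X := (Mc, ptR).

Definition preserves_pts (X Y : TriMetric) (f : X -> Y) : Prop :=
  f ptT = ptT /\ f ptL = ptL /\ f ptR = ptR.

Definition Mmap (X Y : TriMetric) (f : X -> Y) (p : MX X) : MX Y :=
  (fst p, f (snd p)).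

Definition is_continuous {A B : Type} (dA : A -> A -> R) (dB : B -> B -> R)
  (g : A -> B) : Prop :=
  forall x eps, 0 < eps -> exists delta, 0 < delta /\
    forall y, dA x y < delta -> dB (g x) (g y) < eps.

Definition is_lipschitz {A B : Type} (dA : A -> A -> R) (dB : B -> B -> R)
  (g : A -> B) : Prop :=
  exists K, 0 <= K /\ forall x y, dB (g x) (g y) <= K * dA x y.

Definition is_short {A B : Type} (dA : A -> A -> R) (dB : B -> B -> R)
  (g : A -> B) : Prop :=
  forall x y, dB (g x) (g y) <= dA x y.

Definition is_isometric_embedding {A B : Type} (dA : A -> A -> R)
  (dB : B -> B -> R) (g : A -> B) : Prop :=
  forall x y, dB (g x) (g y) = dA x y.

(* Main.v *)
Require Import Defs.
From Stdlib Require Import Reals Lra Classical.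
From Coquelicot Require Import Coquelicot.
Open Scope R_scope.

Section Basics.
Variable X : TriMetric.

Lemma tdist_nonneg (x y : X) : 0 <= tdist x y.
Proof. pose proof (tdist_tri X x y x). rewrite tdist_refl, (tdist_sym X y x) in H. lra. Qed.

Lemma dMX_nonneg (p q : MX X) : 0 <= dMX X p q.
Proof. unfold dMX. destruct (Mlet_eqb _ _); [pose proof (tdist_nonneg (snd p) (snd q)); lra | lra]. Qed.

Lemma dMX_le1 (p q : MX X) : dMX X p q <= 1.
Proof. unfold dMX. destruct (Mlet_eqb _ _); [pose proof (tdist_le1 X (snd p) (snd q)); lra | lra]. Qed.

Lemma dMX_refl (p : MX X) : dMX X p p = 0.
Proof. destruct p as [m x]; unfold dMX; destruct m; simpl; rewrite tdist_refl; lra. Qed.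

Lemma dMX_same (p q : MX X) : fst p = fst q -> dMX X p q = tdist (snd p) (snd q) / 2.
Proof. destruct p as [m x], q as [n y]; simpl; intros ->; unfold dMX; destruct n; reflexivity. Qed.

Lemma dMX_lt1 (p q : MX X) : dMX X p q < 1 -> fst p = fst q.
Proof. destruct p as [m x], q as [n y]; unfold dMX; destruct m, n; simpl; intro H; auto; lra. Qed.

Lemma dMX_tri (p q r : MX X) : dMX X p r <= dMX X p q + dMX X q r.
Proof.
  destruct p as [m x], q as [n y], r as [k z].
  pose proof (tdist_tri X x y z). pose proof (tdist_nonneg x y).
  pose proof (tdist_nonneg y z). pose proof (tdist_nonneg x z).
  pose proof (tdist_le1 X x y). pose proof (tdist_le1 X y z). pose proof (tdist_le1 X x z).
  unfold dMX; destruct m, n, k; simpl; lra.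
Qed.

Lemma chain_nonneg p q c : chain X p q c -> 0 <= c.
Proof. intro H; induction H; [lra| assumption| pose proof (dMX_nonneg p q); lra]. Qed.

Lemma qdist_glb p q : is_glb_Rbar (chain X p q) (Finite (qdist X p q)).
Proof.
  unfold qdist. generalize (Glb_Rbar_correct (chain X p q)).
  destruct (Glb_Rbar (chain X p q)); simpl; intro H; auto.
  - exfalso; destruct H as [Hlb _]. specialize (Hlb _ (chain_seg X p q q 0 (chain_nil X q))). exact Hlb.
  - exfalso; destruct H as [_ Hg]. apply (Hg (Finite 0)). intros x Hx. simpl. exact (chain_nonneg _ _ _ Hx).
Qed.

Lemma Q1 p q c : chain X p q c -> qdist X p q <= c.
Proof. intro H. destruct (qdist_glb p q) as [Hlb _]. exact (Hlb c H). Qed.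

Lemma Q2 p q r : (forall c, chain X p q c -> r <= c) -> r <= qdist X p q.
Proof. intro H. destruct (qdist_glb p q) as [_ Hg]. apply (Hg (Finite r)). intros x Hx. exact (H x Hx). Qed.

Lemma Q_le_dMX p q : qdist X p q <= dMX X p q.
Proof. pose proof (Q1 _ _ _ (chain_seg X p q q 0 (chain_nil X q))). lra. Qed.

Lemma Q_nonneg p q : 0 <= qdist X p q.
Proof. apply Q2. apply chain_nonneg. Qed.

Lemma Qgen p q g g' : (gen X g g' \/ gen X g' g) -> qdist X p q <= dMX X p g + qdist X g' q.
Proof.
  intro Hg. assert (qdist X p q - dMX X p g <= qdist X g' q); [|lra].
  apply Q2. intros c Hc.
  pose proof (Q1 _ _ _ (chain_seg X p g q c (chain_gen X g g' q c Hg Hc))). lra.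
Qed.

Lemma pt_neqs : (@ptT X) <> ptL /\ (@ptT X) <> ptR /\ (@ptL X) <> ptR.
Proof.
  pose proof (tdist_TL X); pose proof (tdist_TR X); pose proof (tdist_LR X).
  repeat split; intro E; rewrite E, tdist_refl in *; lra.
Qed.

Ltac gsplit := repeat match goal with
  | H : _ /\ _ |- _ => destruct H
  | H : _ \/ _ |- _ => destruct H
  | H : exists _, _ |- _ => destruct H end.

Lemma partner_unique x v w : (gen X x v \/ gen X v x) -> (gen X x w \/ gen X w x) -> v = w.
Proof.
  pose proof pt_neqs as [? [? ?]]. unfold gen. intros A B. gsplit; subst; congruence.
Qed.

Definition isglue (s : MX X) := exists v, gen X s v \/ gen X v s.

Lemma glue_close s t : isglue s -> isglue t -> fst s = fst t -> tdist (snd s) (snd t) < 1 -> s = t.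
Proof.
  pose proof (tdist_TL X); pose proof (tdist_TR X); pose proof (tdist_LR X).
  rewrite tdist_sym in H. rewrite tdist_sym in H0. rewrite tdist_sym in H1.
  pose proof (tdist_TL X); pose proof (tdist_TR X); pose proof (tdist_LR X).
  unfold isglue, gen. intros A B C D. gsplit; subst; simpl in *; try reflexivity; try congruence; lra.
Qed.

Lemma glue_pts s : isglue s -> snd s = ptT \/ snd s = ptL \/ snd s = ptR.
Proof. unfold isglue, gen. intros A. gsplit; subst; simpl; auto. Qed.


End Basics.

Ltac gsplit := repeat match goal with
  | H : _ /\ _ |- _ => destruct H
  | H : _ \/ _ |- _ => destruct H
  | H : exists _, _ |- _ => destruct H end.

Section Maps.
Variables X Y : TriMetric.
Variable f : X -> Y.
Hypothesis Hp : preserves_pts X Y f.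

Lemma gen_map p q : gen X p q -> gen Y (Mmap X Y f p) (Mmap X Y f q).
Proof.
  destruct Hp as [ET [EL ER]]. unfold gen, Mmap. intro H; gsplit; subst; simpl;
  rewrite ?ET, ?EL, ?ER; auto.
Qed.

Lemma gen_map2 p q : gen X p q \/ gen X q p -> gen Y (Mmap X Y f p) (Mmap X Y f q) \/ gen Y (Mmap X Y f q) (Mmap X Y f p).
Proof. intros [H|H]; [left|right]; apply gen_map; auto. Qed.

Lemma gen_reflect s s' : gen Y s s' -> exists g g', gen X g g' /\ s = Mmap X Y f g /\ s' = Mmap X Y f g'.
Proof.
  destruct Hp as [ET [EL ER]]. unfold gen, Mmap. intro H; gsplit; subst.
  - exists (Mb, ptT), (Ma, ptL). simpl. rewrite ET, EL. auto.
  - exists (Ma, ptR), (Mc, ptT). simpl. rewrite ET, ER. auto.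
  - exists (Mc, ptL), (Mb, ptR). simpl. rewrite EL, ER. auto.
Qed.

Lemma chain_map K : 0 <= K ->
  (forall p q, dMX Y (Mmap X Y f p) (Mmap X Y f q) <= K * dMX X p q) ->
  forall s t c, chain X s t c -> exists c', chain Y (Mmap X Y f s) (Mmap X Y f t) c' /\ c' <= K * c.
Proof.
  intros HK Hd s t c H. induction H.
  - exists 0. split; [constructor | lra].
  - destruct IHchain as [c' [Hc' Hle]]. exists c'. split; auto.
    eapply chain_gen; [apply gen_map2; eauto | exact Hc'].
  - destruct IHchain as [c' [Hc' Hle]]. exists (dMX Y (Mmap X Y f p) (Mmap X Y f q) + c'). split.
    + apply chain_seg; auto.
    + specialize (Hd p q). lra.
Qed.

Lemma qdist_map K : 0 < K ->
  (forall p q, dMX Y (Mmap X Y f p) (Mmap X Y f q) <= K * dMX X p q) ->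
  forall p q, qdist Y (Mmap X Y f p) (Mmap X Y f q) <= K * qdist X p q.
Proof.
  intros HK Hd p q.
  assert (qdist Y (Mmap X Y f p) (Mmap X Y f q) / K <= qdist X p q).
  { apply Q2. intros c Hc. destruct (chain_map K (Rlt_le _ _ HK) Hd _ _ _ Hc) as [c' [Hc' Hle]].
    pose proof (Q1 _ _ _ _ Hc').
    apply Rmult_le_reg_l with K; [lra|]. replace (K * (qdist Y (Mmap X Y f p) (Mmap X Y f q) / K))
      with (qdist Y (Mmap X Y f p) (Mmap X Y f q)) by (field; lra). lra. }
  apply Rmult_le_reg_l with (/ K). apply Rinv_0_lt_compat; lra.
  replace (/ K * (K * qdist X p q)) with (qdist X p q) by (field; lra).
  unfold Rdiv in H. rewrite Rmult_comm. exact H.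
Qed.

Lemma short_part : is_short (@tdist X) (@tdist Y) f -> is_short (qdist X) (qdist Y) (Mmap X Y f).
Proof.
  intros Hs p q. pose proof (qdist_map 1 Rlt_0_1) as H.
  rewrite <- (Rmult_1_l (qdist X p q)). apply H.
  intros p' q'. rewrite Rmult_1_l. unfold dMX, Mmap; simpl. destruct (Mlet_eqb _ _); [|lra].
  specialize (Hs (snd p') (snd q')). lra.
Qed.

Lemma lip_part : is_lipschitz (@tdist X) (@tdist Y) f -> is_lipschitz (qdist X) (qdist Y) (Mmap X Y f).
Proof.
  intros [K [HK Hl]]. exists (Rmax K 1). split. { pose proof (Rmax_r K 1). lra. }
  intros p q. apply qdist_map. { pose proof (Rmax_r K 1). lra. }
  intros p' q'. pose proof (Rmax_r K 1). pose proof (Rmax_l K 1).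
  unfold dMX, Mmap; simpl. destruct (Mlet_eqb _ _); [|lra].
  specialize (Hl (snd p') (snd q')). pose proof (tdist_nonneg X (snd p') (snd q')).
  assert (K * tdist (snd p') (snd q') <= Rmax K 1 * tdist (snd p') (snd q')) by
    (apply Rmult_le_compat_r; lra). lra.
Qed.

Hypothesis Hiso : is_isometric_embedding (@tdist X) (@tdist Y) f.

Lemma iso_dMX p q : dMX Y (Mmap X Y f p) (Mmap X Y f q) = dMX X p q.
Proof. unfold dMX, Mmap; simpl. destruct (Mlet_eqb _ _); [rewrite Hiso|]; reflexivity. Qed.

Lemma iso_aux s t c : chain Y s t c -> forall q, t = Mmap X Y f q ->
  forall p, qdist X p q <= c + dMX Y (Mmap X Y f p) s.
Proof.
  intro H. induction H; intros q0 Ht p0; subst.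
  - rewrite iso_dMX. pose proof (Q_le_dMX X p0 q0). lra.
  - assert (exists g g', (gen X g g' \/ gen X g' g) /\ p = Mmap X Y f g /\ q = Mmap X Y f g') as [g [g' [Hg [E1 E2]]]].
    { destruct H as [H|H]; destruct (gen_reflect _ _ H) as [g [g' [Hg' [E1 E2]]]].
      - exists g, g'; auto.
      - exists g', g; auto. }
    subst. specialize (IHchain q0 eq_refl g'). rewrite dMX_refl in IHchain.
    rewrite iso_dMX. pose proof (Qgen X p0 q0 g g' Hg). lra.
  - specialize (IHchain q0 eq_refl p0). pose proof (dMX_tri Y (Mmap X Y f p0) p q). lra.
Qed.

Lemma iso_part : is_isometric_embedding (qdist X) (qdist Y) (Mmap X Y f).
Proof.
  intros p q. apply Rle_antisym.
  - apply short_part. intros x y. rewrite Hiso. lra.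
  - apply Q2. intros c Hc. pose proof (iso_aux _ _ _ Hc q eq_refl p). rewrite dMX_refl in H. lra.
Qed.

End Maps.

Section Cont.
Variable X : TriMetric.
Variable p : MX X.

Definition Rg (a : R) (s : MX X) := exists u, (u = p \/ gen X p u \/ gen X u p) /\
  fst s = fst u /\ tdist (snd u) (snd s) / 2 <= a.

Definition Dcond (delta : R) := 0 < delta /\ 2 * delta <= 1 /\
  forall z, (z = ptT \/ z = ptL \/ z = ptR) -> tdist (snd p) z < 2 * delta -> snd p = z.

Lemma Rg_gen delta a s s' : Dcond delta -> Rg a s -> 0 <= a -> a < delta ->
  (gen X s s' \/ gen X s' s) -> Rg a s'.
Proof.
  intros [Hd0 [Hd1 Hdz]] [u [Hu [Hf Hdu]]] Ha Had Hg.
  assert (Gs : isglue X s) by (exists s'; auto).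
  destruct Hu as [Hu|Hu].
  - subst u. assert (snd p = snd s) by (apply Hdz; [apply glue_pts; auto | lra]).
    assert (s = p) by (destruct s, p; simpl in *; congruence). subst s.
    exists s'. split; [right; auto|]. split; [reflexivity|]. rewrite tdist_refl. lra.
  - assert (Gu : isglue X u) by (exists p; tauto).
    assert (s = u). { symmetry. apply glue_close; auto. lra. }
    subst u. assert (s' = p) by (apply (partner_unique X s); tauto). subst s'.
    exists p. split; [left; auto|]. split; [reflexivity|]. rewrite tdist_refl. lra.
Qed.

Lemma chain_Rg delta : Dcond delta -> forall s t c, chain X s t c ->
  forall a, Rg a s -> 0 <= a -> a + c < delta -> Rg (a + c) t.
Proof.
  intros HD s t c H. induction H; intros a Hs Ha Hlt.
  - rewrite Rplus_0_r. auto.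
  - pose proof (chain_nonneg X _ _ _ H0). apply IHchain; auto.
    eapply Rg_gen; eauto. lra.
  - pose proof (chain_nonneg X _ _ _ H). pose proof (dMX_nonneg X p0 q).
    destruct HD as [Hd0 [Hd1 _]].
    assert (Fq : fst p0 = fst q) by (apply dMX_lt1; lra).
    rewrite <- Rplus_assoc. apply IHchain; [| lra | lra].
    destruct Hs as [u [Hu [Hf Hdu]]]. exists u. split; auto. split; [congruence|].
    rewrite dMX_same by auto. pose proof (tdist_tri X (snd u) (snd p0) (snd q)). lra.
Qed.

End Cont.

Lemma sep_delta (X : TriMetric) (x z : X) : exists d, 0 < d /\ (tdist x z < d -> x = z).
Proof.
  destruct (classic (x = z)) as [E|E].
  - exists 1. split; [lra | auto].
  - exists (tdist x z). split.
    + destruct (Rle_lt_or_eq_dec _ _ (tdist_nonneg X x z)) as [h|h]; auto.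
      exfalso. apply E. apply tdist_sep. auto.
    + intro h; lra.
Qed.

Lemma cont_part (X Y : TriMetric) (f : X -> Y) : preserves_pts X Y f ->
  is_continuous (@tdist X) (@tdist Y) f -> is_continuous (qdist X) (qdist Y) (Mmap X Y f).
Proof.
  intros Hp Hc p eps Heps.
  destruct (Hc (snd p) eps Heps) as [d1 [Hd1 H1]].
  assert (exists d2, 0 < d2 /\ forall u, (gen X p u \/ gen X u p) -> forall y,
    tdist (snd u) y < d2 -> tdist (f (snd u)) (f y) < eps) as [d2 [Hd2 H2]].
  { destruct (classic (exists u, gen X p u \/ gen X u p)) as [[u Hu]|N].
    - destruct (Hc (snd u) eps Heps) as [d [Hd Hdd]]. exists d. split; auto.
      intros u' Hu'. rewrite <- (partner_unique X p u u'); auto.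
    - exists 1. split; [lra|]. intros u Hu. exfalso. apply N. exists u. auto. }
  destruct (sep_delta X (snd p) ptT) as [dT [HdT HT]].
  destruct (sep_delta X (snd p) ptL) as [dL [HdL HL]].
  destruct (sep_delta X (snd p) ptR) as [dR [HdR HR]].
  set (m := Rmin (Rmin d1 d2) (Rmin (Rmin dT dL) (Rmin dR 1))).
  assert (Hm : 0 < m /\ m <= d1 /\ m <= d2 /\ m <= dT /\ m <= dL /\ m <= dR /\ m <= 1).
  { unfold m. unfold Rmin. repeat destruct Rle_dec; repeat split; lra. }
  destruct Hm as [Hm0 [Hm1 [Hm2 [HmT [HmL [HmR Hm3]]]]]].
  exists (m / 2). split; [lra|].
  intros q Hq.
  assert (HD : Dcond X p (m / 2)).
  { split; [lra|]. split; [lra|]. intros z [Ez|[Ez|Ez]] Hz; subst z;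
    [apply HT | apply HL | apply HR]; lra. }
  assert (exists c, chain X p q c /\ c < m / 2) as [c [Hch Hcl]].
  { apply NNPP. intro N. assert (m / 2 <= qdist X p q); [|lra].
    apply Q2. intros c Hc0. apply Rnot_lt_le. intro Hlt. apply N. exists c. auto. }
  assert (R0 : Rg X p 0 p).
  { exists p. split; [left; auto|]. split; [auto|]. rewrite tdist_refl. lra. }
  pose proof (chain_nonneg X _ _ _ Hch).
  pose proof (chain_Rg X p _ HD _ _ _ Hch 0 R0 (Rle_refl 0) ltac:(lra)) as [u [Hu [Hf Hdu]]].
  destruct Hu as [Hu|Hu].
  - subst u. pose proof (H1 (snd q) ltac:(lra)).
    pose proof (Q_le_dMX Y (Mmap X Y f p) (Mmap X Y f q)) as H3.
    rewrite dMX_same in H3 by (simpl; auto). simpl in H3. lra.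
  - pose proof (H2 u Hu (snd q) ltac:(lra)).
    assert (Hch' : chain Y (Mmap X Y f p) (Mmap X Y f q) (dMX Y (Mmap X Y f u) (Mmap X Y f q) + 0)).
    { eapply chain_gen. apply gen_map2; eauto. apply chain_seg. apply chain_nil. }
    pose proof (Q1 _ _ _ _ Hch') as H4. rewrite dMX_same in H4 by (simpl; auto). simpl in H4. lra.
Qed.

Theorem mainTheorem1 (X Y : TriMetric) (f : X -> Y) :
  preserves_pts X Y f ->
  (is_continuous (@tdist X) (@tdist Y) f ->
     is_continuous (qdist X) (qdist Y) (Mmap X Y f)) /\
  (is_lipschitz (@tdist X) (@tdist Y) f ->
     is_lipschitz (qdist X) (qdist Y) (Mmap X Y f)) /\
  (is_short (@tdist X) (@tdist Y) f ->
     is_short (qdist X) (qdist Y) (Mmap X Y f)) /\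
  (is_isometric_embedding (@tdist X) (@tdist Y) f ->
     is_isometric_embedding (qdist X) (qdist Y) (Mmap X Y f)).
Proof.
  intro Hp. split; [|split; [|split]].
  - apply cont_part; auto.
  - apply lip_part; auto.
  - apply short_part; auto.
  - intro Hi. apply iso_part; auto.
Qed.
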